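(* If $\mathrm{char}(\Bbbk)=3$, then $H=\{h_1,h_2,h_3\}$ with $h_1=yz-x^3-y^6z^2+xy^4z^3$, $h_2=z^3+xy^3+x^2yz-y^5z^4$, $h_3=y^4+xy^2z+x^2z^2-y^4z^5$ is a standard basis of $P$ with respect to the negative degree reverse lexicographic order $>_{\rm ds}$.
   Context: $\Bbbk$ is a field, $\rho:\Bbbk[[x,y,z]]\to\Bbbk[[t]]$ is the $\Bbbk$-algebra morphism with $\rho(x)=t^6+t^{31}$, $\rho(y)=t^8$, $\rho(z)=t^{10}$, and $P=\ker\rho$. The order $>_{\rm ds}$ on monomials $x^\alpha=x^{\alpha_1}y^{\alpha_2}z^{\alpha_3}$: $x^\alpha>_{\rm ds}x^\beta$ iff $|\alpha|<|\beta|$, or $|\alpha|=|\beta|$ and there is $i\in\{1,2\}$ with $\alpha_3=\beta_3,\ldots,\alpha_{i+1}=\beta_{i+1}$ and $\alpha_i<\beta_i$ (so $1>x>y>z>x^2>xy>y^2>xz>yz>z^2>\cdots$). For $0\ne f\in\Bbbk[[x,y,z]]$, the leading monomial $\mathrm{LM}(f)$ is the $>_{\rm ds}$-largest monomial in the support of $f$. A finite set $G\subseteq I$ is a standard basis of an ideal $I\subseteq\Bbbk[[x,y,z]]$ if the ideal generated by $\{\mathrm{LM}(g):g\in G,g\neq0\}$ equals the ideal generated by $\{\mathrm{LM}(f): f\in I, f\ne0\}$. *)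

(* Defs.v *)
From Stdlib Require Import List.
From mathcomp Require Import all_boot all_order all_algebra.
Set Implicit Arguments. Unset Strict Implicit. Unset Printing Implicit Defensive.
Import GRing.Theory.
Local Open Scope ring_scope.

(* exponent vectors (a1,a2,a3) of monomials x^a1 y^a2 z^a3 *)
Definition mon : Type := (nat * nat * nat)%type.
Definition e1 (m : mon) : nat := m.1.1.
Definition e2 (m : mon) : nat := m.1.2.
Definition e3 (m : mon) : nat := m.2.
Definition mdeg (m : mon) : nat := (e1 m + e2 m + e3 m)%N.

Section PS.
Variable K : fieldType.

(* K[[x,y,z]] : a power series is its coefficient function *)
Definition ps := mon -> K.

Definition ps0 : ps := fun _ => 0.

Definition psmul (f g : ps) : ps := fun m =>
  \sum_(i < (e1 m).+1) \sum_(j < (e2 m).+1) \sum_(l < (e3 m).+1)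
     f (i : nat, j : nat, l : nat) * g ((e1 m - i)%N, (e2 m - j)%N, (e3 m - l)%N).

Definition psmono (m : mon) : ps := fun b => if b == m then 1 else 0.

Definition ps_of_terms (s : seq (K * mon)) : ps :=
  fun b => \sum_(p <- s) (if p.2 == b then p.1 else 0).

Definition in_ideal (S : ps -> Prop) (f : ps) : Prop :=
  exists l : seq (ps * ps), (forall p, In p l -> S p.2) /\
    forall b, f b = \sum_(p <- l) psmul p.1 p.2 b.

Definition us := nat -> K.
Definition umul (f g : us) : us := fun n => \sum_(i < n.+1) f i * g (n - i)%N.
Definition utpow (k : nat) : us := fun n => (n == k)%:R.
Definition upow (f : us) (k : nat) : us := iter k (umul f) (utpow 0).

Definition rho_x : us := fun n => (n == 6)%:R + (n == 31)%:R.

(* The continuous K-algebra morphism rho : K[[x,y,z]] -> K[[t]],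
   x |-> t^6+t^31, y |-> t^8, z |-> t^10.  Since rho(x^a y^b z^c) has order
   6a+8b+10c, only exponents a,b,c <= n contribute to the coefficient of t^n. *)
Definition rho (f : ps) : us := fun n =>
  \sum_(a < n.+1) \sum_(b < n.+1) \sum_(c < n.+1)
     f (a : nat, b : nat, c : nat) * umul (upow rho_x a) (utpow (8 * b + 10 * c)) n.

Definition P_ker (f : ps) : Prop := forall n, rho f n = 0.

Definition ds_gt (a b : mon) : bool :=
  (mdeg a < mdeg b)%N ||
  ((mdeg a == mdeg b) &&
    [|| (e3 a < e3 b)%N,
        (e3 a == e3 b) && (e2 a < e2 b)%N
      | [&& e3 a == e3 b, e2 a == e2 b & (e1 a < e1 b)%N]]).

Definition isLM (f : ps) (m : mon) : Prop :=
  f m != 0 /\ forall b, f b != 0 -> b <> m -> ds_gt m b.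

Definition LMset (S : ps -> Prop) (g : ps) : Prop :=
  exists f m, S f /\ isLM f m /\ g = psmono m.

Definition standard_basis (G : seq ps) (I : ps -> Prop) : Prop :=
  (forall g, In g G -> I g) /\
  forall f, in_ideal (LMset (fun g => In g G)) f <-> in_ideal (LMset I) f.

Definition h1 : ps := ps_of_terms
  [:: (1, (0,1,1)%N); (-1, (3,0,0)%N); (-1, (0,6,2)%N); (1, (1,4,3)%N)].
Definition h2 : ps := ps_of_terms
  [:: (1, (0,0,3)%N); (1, (1,3,0)%N); (1, (2,1,1)%N); (-1, (0,5,4)%N)].
Definition h3 : ps := ps_of_terms
  [:: (1, (0,4,0)%N); (1, (1,2,1)%N); (1, (2,0,2)%N); (-1, (0,4,5)%N)].

End PS.

(* Main.v *)
Require Import Defs.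
From mathcomp Require Import all_boot all_order all_algebra zify ring.
Set Implicit Arguments. Unset Strict Implicit. Unset Printing Implicit Defensive.
Import GRing.Theory.
Local Open Scope ring_scope.

Section Aux.
Variable K : fieldType.

Lemma sum_delta (G : nat -> K) (n k : nat) :
  \sum_(i < n.+1) G i * (i == k :> nat)%:R = if (k <= n)%N then G k else 0.
Proof.
rewrite (eq_bigr (fun i : 'I_n.+1 => if (i == k :> nat) then G i else 0)); last first.
  by move=> i _; case: (eqVneq (i:nat) k) => [->|_]; rewrite ?eqxx ?mulr1 ?mulr0.
by rewrite -big_mkcond big_ord1_eq ltnS.
Qed.

Lemma sum_delta_sub (G : nat -> K) (n k : nat) :
  \sum_(i < n.+1) G i * ((n - i)%N == k)%:R = if (k <= n)%N then G (n - k)%N else 0.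
Proof.
case: (leqP k n) => hk.
  have := sum_delta G n (n - k)%N.
  rewrite (_ : ((n - k)%N <= n)%N = true); last by apply/idP; lia.
  move=> <-; apply: eq_bigr => i _.
  have Hi := ltn_ord i.
  by have -> : ((n - i)%N == k) = (i == (n - k)%N :> nat) by apply/eqP/eqP; lia.
rewrite big1 // => i _.
have Hi := ltn_ord i.
have -> : ((n - i)%N == k) = false by apply/eqP; lia.
by rewrite /= mulr0n mulr0.
Qed.

Lemma sum_seq_delta (T : eqType) (S : seq T) (G : T -> K) x :
  uniq S -> \sum_(p <- S) (x == p)%:R * G p = if x \in S then G x else 0.
Proof.
elim: S => [|p S IH] /=; first by rewrite big_nil.
case/andP=> pS uS; rewrite big_cons IH // inE.
case: (eqVneq x p) => [->|nxp] /=; last by rewrite mul0r add0r.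
by rewrite (negPf pS) mul1r addr0.
Qed.


Fixpoint E (a : nat) : seq nat :=
  if a is a'.+1 then [seq (6 + e)%N | e <- E a'] ++ [seq (31 + e)%N | e <- E a']
  else [:: 0%N].

Lemma cnt_shift (s k : nat) (l : seq nat) :
  count (preim (addn s) (pred1 k)) l = if (s <= k)%N then count_mem (k - s)%N l else 0%N.
Proof.
case: (leqP s k) => h.
  apply: eq_count => e /=; apply/eqP/eqP; lia.
rewrite -(count_pred0 l); apply: eq_count => e /=; apply/eqP; lia.
Qed.

Lemma umul_rho_x (g : us K) (k : nat) :
  umul (rho_x K) g k = (if (6 <= k)%N then g (k - 6)%N else 0) + (if (31 <= k)%N then g (k - 31)%N else 0).
Proof.
rewrite /umul /rho_x.
rewrite (eq_bigr (fun i : 'I_k.+1 => g (k - i)%N * (i == 6%N :> nat)%:R + g (k - i)%N * (i == 31%N :> nat)%:R)); last first.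
  by move=> i _; rewrite mulrDl mulrC [X in _ + X]mulrC.
by rewrite big_split /= !(sum_delta (fun i => g (k - i)%N)).
Qed.

Lemma upowE (a k : nat) : upow (rho_x K) a k = (count_mem k (E a))%:R :> K.
Proof.
elim: a k => [|a IH] k.
  by rewrite /upow /= /utpow addn0 eq_sym.
rewrite /upow iterS -/(upow (rho_x K) a) umul_rho_x /= count_cat !count_map !cnt_shift natrD.
by rewrite !IH; case: (6 <= k)%N; case: (31 <= k)%N.
Qed.

Lemma cntE (a k : nat) : (k < 6 * a + 50)%N -> count_mem k (E a) = ((k == 6 * a) + (k == 6 * a + 25) * a)%N.
Proof.
elim: a k => [|a IH] k hk.
  by rewrite /= !muln0 !addn0 eq_sym.
rewrite /= count_cat !count_map !cnt_shift.
case: (leqP 6 k) => h6; last first.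
  have -> : (31 <= k)%N = false by apply/negbTE; rewrite -ltnNge; lia.
  have -> : (k == 6 * a.+1) = false by apply/eqP; lia.
  by have -> : (k == 6 * a.+1 + 25) = false by apply/eqP; lia.
rewrite IH; last by lia.
case: (leqP 31 k) => h31.
  rewrite IH; last by lia.
  case: (eqVneq k (6 * a.+1)) => [Ek|n1].
    rewrite Ek.
    have -> : (6 * a.+1 - 6 == 6 * a)%N = true by apply/eqP; lia.
    have -> : (6 * a.+1 - 6 == 6 * a + 25)%N = false by apply/eqP; lia.
    have -> : (6 * a.+1 - 31 == 6 * a)%N = false by apply/eqP; lia.
    have -> : (6 * a.+1 - 31 == 6 * a + 25)%N = false by apply/eqP; lia.
    have -> : (6 * a.+1 == 6 * a.+1 + 25)%N = false by apply/eqP; lia.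
    by [].
  case: (eqVneq k (6 * a.+1 + 25)) => [Ek|n2].
    rewrite Ek.
    have -> : (6 * a.+1 + 25 - 6 == 6 * a)%N = false by apply/eqP; lia.
    have -> : (6 * a.+1 + 25 - 6 == 6 * a + 25)%N = true by apply/eqP; lia.
    have -> : (6 * a.+1 + 25 - 31 == 6 * a)%N = true by apply/eqP; lia.
    have -> : (6 * a.+1 + 25 - 31 == 6 * a + 25)%N = false by apply/eqP; lia.
    rewrite /=; lia.
  have -> : (k - 6 == 6 * a)%N = false by apply/eqP; lia.
  have -> : (k - 6 == 6 * a + 25)%N = false by apply/eqP; lia.
  have -> : (k - 31 == 6 * a)%N = false by apply/eqP; lia.
  by have -> : (k - 31 == 6 * a + 25)%N = false by apply/eqP; lia.
have -> : (k - 6 == 6 * a + 25)%N = false by apply/eqP; lia.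
have -> : (k == 6 * a.+1 + 25)%N = false by apply/eqP; lia.
rewrite mul0n !addn0.
by have -> : (k - 6 == 6 * a)%N = (k == 6 * a.+1) by apply/eqP/eqP; lia.
Qed.

Definition Wn (a s n : nat) : K := if (s <= n)%N then (count_mem (n - s)%N (E a))%:R else 0.

Lemma umulW (a s n : nat) : umul (upow (rho_x K) a) (utpow K s) n = Wn a s n.
Proof.
rewrite /umul /utpow /Wn.
have := sum_delta_sub (fun i => upow (rho_x K) a i) n s; rewrite /= upowE => <-.
by apply: eq_bigr.
Qed.

Lemma Wv (a s n : nat) : (n < 6 * a + s + 50)%N ->
  Wn a s n = ((n == 6 * a + s)%N + (n == 6 * a + s + 25)%N * a)%:R.
Proof.
move=> h; rewrite /Wn; case: (leqP s n) => hs.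
  rewrite cntE; last by lia.
  congr (_%:R); congr (_ + _)%N; first by congr (nat_of_bool _); apply/eqP/eqP; lia.
  by congr (nat_of_bool _ * _)%N; apply/eqP/eqP; lia.
have -> : (n == 6 * a + s)%N = false by apply/eqP; lia.
by have -> : (n == 6 * a + s + 25)%N = false by apply/eqP; lia.
Qed.

Lemma rhoE (f : ps K) (n : nat) : rho f n =
  \sum_(a < n.+1) \sum_(b < n.+1) \sum_(c < n.+1) f (a : nat, b : nat, c : nat) * Wn a (8 * b + 10 * c) n.
Proof.
by apply: eq_bigr => a _; apply: eq_bigr => b _; apply: eq_bigr => c _; rewrite umulW.
Qed.


Lemma rho_loc (f : ps K) (N : nat) (S : seq mon) :
  uniq S -> (forall p, p \in S -> ~~ [&& (e1 p <= N)%N, (e2 p <= N)%N & (e3 p <= N)%N] ->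
     f p * Wn (e1 p) (8 * e2 p + 10 * e3 p) N = 0) ->
  (forall a b c : nat, (a, b, c) \notin S -> f (a, b, c) * Wn a (8 * b + 10 * c) N = 0) ->
  rho f N = \sum_(p <- S) f p * Wn (e1 p) (8 * e2 p + 10 * e3 p) N.
Proof.
move=> uS inS offS.
set F := fun p : mon => f p * Wn (e1 p) (8 * e2 p + 10 * e3 p) N.
rewrite rhoE.
transitivity (\sum_(a < N.+1) \sum_(b < N.+1) \sum_(c < N.+1) \sum_(p <- S)
   (((a : nat), (b : nat), (c : nat)) == p)%:R * F p).
  apply: eq_bigr => a _; apply: eq_bigr => b _; apply: eq_bigr => c _.
  rewrite sum_seq_delta //.
  case: ifP => h; first by [].
  by apply: offS; rewrite h.
under eq_bigr => a _ do under eq_bigr => b _ do rewrite exchange_big.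
under eq_bigr => a _ do rewrite exchange_big.
rewrite exchange_big big_seq [in RHS]big_seq; apply: eq_bigr => -[[p1 p2] p3] /inS hbox.
case: (boolP [&& (p1 <= N)%N, (p2 <= N)%N & (p3 <= N)%N]); last first.
  move=> /hbox; rewrite -/(F (p1, p2, p3)) => ->.
  by rewrite big1 // => a _; rewrite big1 // => b _; rewrite big1 // => c _; rewrite mulr0.
move=> /and3P [h1 h2 h3].
transitivity (\sum_(a < N.+1) \sum_(b < N.+1) \sum_(c < N.+1)
   (F (p1, p2, p3) * (c == p3 :> nat)%:R) * (b == p2 :> nat)%:R * (a == p1 :> nat)%:R).
  apply: eq_bigr => a _; apply: eq_bigr => b _; apply: eq_bigr => c _.
  rewrite !xpair_eqE -!mulnb !natrM.
  rewrite /F; ring.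
have sd := sum_delta (fun _ => F (p1, p2, p3)) N.
under eq_bigr => a _ do under eq_bigr => b _ do rewrite -!big_distrl /= sd h3.
under eq_bigr => a _ do rewrite -!big_distrl /= sd h2.
by rewrite sd h1.
Qed.


Lemma supp (f : ps K) (a0 b0 c0 a b c : nat) : isLM f (a0, b0, c0) -> f (a, b, c) != 0 ->
  (a = a0 /\ b = b0 /\ c = c0) \/ (a0 + b0 + c0 < a + b + c)%N \/
  (a0 + b0 + c0 = a + b + c /\ ((c0 < c)%N \/ (c0 = c /\ (b0 < b)%N) \/ (c0 = c /\ b0 = b /\ (a0 < a)%N)))%N.
Proof.
move=> [_ H] hf.
case: (eqVneq (a, b, c) (a0, b0, c0)) => [[-> -> ->]|ne]; first by left.
have := H _ hf (fun e => negP ne (introT eqP e)).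
rewrite /ds_gt /mdeg /e1 /e2 /e3 /= => h; right; lia.
Qed.

Lemma Wn0 (a s n : nat) : (n < 6 * a + s)%N -> Wn a s n = 0.
Proof.
move=> h; rewrite Wv; last by lia.
have -> : (n == 6 * a + s)%N = false by apply/eqP; lia.
by have -> : (n == 6 * a + s + 25)%N = false by apply/eqP; lia.
Qed.

End Aux.

Ltac decide_eqs := repeat match goal with |- context [(?x == ?y :> nat)] =>
  first [ have -> : (x == y) = true by apply/eqP; lia
        | have -> : (x == y) = false by apply/eqP; lia ] end.

Ltac offS_tac f hLM := let a := fresh "a" in let b := fresh "b" in let c := fresh "c" in
  let hnot := fresh "hnot" in let hf := fresh "hf" in let hs := fresh "hs" in
  move=> a b c hnot; case: (eqVneq (f (a, b, c)) 0) => [->|hf]; [by rewrite mul0r|];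
  have hs := supp hLM hf; rewrite !inE !xpair_eqE in hnot;
  rewrite Wv; [|lia];
  match goal with |- _ * (?x)%:R = 0 => have -> : x = 0%N by lia end; by rewrite mulr0.

Ltac box_tac := let p1 := fresh "p" in let p2 := fresh "p" in let p3 := fresh "p" in
  move=> [[p1 p2] p3]; rewrite !inE !xpair_eqE /e1 /e2 /e3 /= => ? ?; exfalso; lia.

Ltac eval_tac := rewrite !big_cons !big_nil /e1 /e2 /e3 /= !Wv; try lia; decide_eqs;
  rewrite /= ?mul0n ?mul1n ?addn0 ?add0n ?mulr1n ?mulr1 ?addr0.

Section Main.
Variable K : fieldType.
Hypothesis char3 : (3%N \in [pchar K]%R).

Lemma nonstd (f : ps K) (a0 b0 c0 : nat) : P_ker f -> isLM f (a0, b0, c0) ->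
  ((0 < b0)%N && (0 < c0)%N) || (3 <= c0)%N || (4 <= b0)%N.
Proof.
move=> hP hLM; have fm0 := hLM.1.
apply/negPn/negP => hstd; move/eqP: fm0; apply.
case: c0 hstd hLM => [|[|[|c0]]]; case: b0 => [|[|[|[|b0]]]] //= _ hLM.
-
  have := hP (6 * a0)%N.
  rewrite (@rho_loc _ _ _ [:: (a0, 0, 0)%N]) //; [ | box_tac | offS_tac f hLM].
  by eval_tac.
-
  have := hP (6 * a0 + 8)%N.
  rewrite (@rho_loc _ _ _ [:: (a0, 1, 0)%N]) //; [ | box_tac | offS_tac f hLM].
  by eval_tac.
-
  have E1 := hP (6 * a0 + 16)%N.
  rewrite (@rho_loc _ _ _ [:: (a0, 2, 0); (a0.+1, 0, 1)]%N) in E1; [ | | box_tac | offS_tac f hLM]; last first.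
    rewrite /= !inE !xpair_eqE; lia.
  have E2 := hP (6 * a0 + 41)%N.
  rewrite (@rho_loc _ _ _ [:: (a0, 2, 0); (a0.+1, 0, 1)]%N) in E2; [ | | box_tac | offS_tac f hLM]; last first.
    rewrite /= !inE !xpair_eqE; lia.
  move: E1 E2; eval_tac; rewrite ?mulrSr.
  set x := f _; set y := f _ => E1 E2.
  have -> : x = (a0%:R + 1) * (x + y) - (x * a0%:R + y * (a0%:R + 1)) by ring.
  by rewrite E1 E2 mulr0 subrr.
-
  have E1 := hP (6 * a0 + 24)%N.
  rewrite (@rho_loc _ _ _ [:: (a0, 3, 0); (a0.+1, 1, 1); (a0 + 4, 0, 0)]%N) in E1; [ | | box_tac | offS_tac f hLM]; last first.
    rewrite /= !inE !xpair_eqE; lia.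
  have E2 := hP (6 * a0 + 49)%N.
  rewrite (@rho_loc _ _ _ [:: (a0, 3, 0); (a0.+1, 1, 1); (a0 + 4, 0, 0)]%N) in E2; [ | | box_tac | offS_tac f hLM]; last first.
    rewrite /= !inE !xpair_eqE; lia.
  move: E1 E2; eval_tac.
  have h3 : (3%:R : K) = 0 := pcharf0 char3.
  rewrite (_ : (a0 + 4)%:R = (a0.+1)%:R + 3%:R :> K); last by rewrite -natrD; congr (_ *+ _); lia.
  rewrite h3 addr0 mulrSr.
  set x := f _; set y := f _; set z := f _ => E1 E2.
  have -> : x = (a0%:R + 1) * (x + y + z) - (x * a0%:R + (y * (a0%:R + 1) + z * (a0%:R + 1))) by ring.
  by rewrite -addrA E1 E2 mulr0 subrr.
-
  have := hP (6 * a0 + 10)%N.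
  rewrite (@rho_loc _ _ _ [:: (a0, 0, 1)%N]) //; [ | box_tac | offS_tac f hLM].
  by eval_tac.
-
  have E1 := hP (6 * a0 + 20)%N.
  rewrite (@rho_loc _ _ _ [:: (a0, 0, 2); (a0.+2, 1, 0)]%N) in E1; [ | | box_tac | offS_tac f hLM]; last first.
    rewrite /= !inE !xpair_eqE; lia.
  have E2 := hP (6 * a0 + 45)%N.
  rewrite (@rho_loc _ _ _ [:: (a0, 0, 2); (a0.+2, 1, 0)]%N) in E2; [ | | box_tac | offS_tac f hLM]; last first.
    rewrite /= !inE !xpair_eqE; lia.
  move: E1 E2; eval_tac.
  have h3 : (3%:R : K) = 0 := pcharf0 char3.
  have h2 : (2%:R : K) != 0.
    apply/eqP => h; have : (1 : K) = 3%:R - 2%:R by rewrite -natrB.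
    by rewrite h3 h subrr; apply/eqP; rewrite oner_neq0.
  rewrite (_ : (a0.+2)%:R = a0%:R + 2%:R :> K); last by rewrite -natrD; congr (_ *+ _); lia.
  set x := f _; set y := f _ => E1 E2.
  have : y * 2%:R = 0.
    have -> : y * 2%:R = (x * a0%:R + y * (a0%:R + 2%:R)) - a0%:R * (x + y) by ring.
    by rewrite E1 E2 mulr0 subrr.
  move/eqP; rewrite mulf_eq0 (negPf h2) orbF => /eqP hy.
  by move: E1; rewrite hy addr0.
Qed.
End Main.

Section Mono.
Variable K : fieldType.

Lemma psmul_mono (g : ps K) (m1 m2 m3 b1 b2 b3 : nat) :
  psmul g (psmono K (m1, m2, m3)) (b1, b2, b3) =
  if [&& (m1 <= b1)%N, (m2 <= b2)%N & (m3 <= b3)%N] then g ((b1 - m1)%N, (b2 - m2)%N, (b3 - m3)%N) else 0.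
Proof.
rewrite /psmul /psmono /e1 /e2 /e3 /=.
transitivity (\sum_(i < b1.+1) \sum_(j < b2.+1) \sum_(l < b3.+1)
  (g (i : nat, j : nat, l : nat) * ((b3 - l)%N == m3)%:R) * ((b2 - j)%N == m2)%:R * ((b1 - i)%N == m1)%:R).
  apply: eq_bigr => i _; apply: eq_bigr => j _; apply: eq_bigr => l _.
  rewrite !xpair_eqE; case: ((b1 - i)%N == m1); case: ((b2 - j)%N == m2); case: ((b3 - l)%N == m3);
  by rewrite /= ?mulr1n ?mulr0n ?mulr1 ?mulr0.
case: (leqP m3 b3) => h3; last first.
  rewrite !andbF big1 // => i _; rewrite big1 // => j _.
  rewrite -!big_distrl /= (sum_delta_sub (fun l => g (i : nat, j : nat, l))).
  by rewrite leqNgt h3 !mul0r.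
under eq_bigr => i _ do under eq_bigr => j _ do
  rewrite -!big_distrl /= (sum_delta_sub (fun l => g (i : nat, j : nat, l))) h3.
case: (leqP m2 b2) => h2; last first.
  rewrite !andbF ?andFb big1 // => i _.
  rewrite -!big_distrl /= (sum_delta_sub (fun j => g (i : nat, j, (b3 - m3)%N))).
  by rewrite leqNgt h2 !mul0r.
under eq_bigr => i _ do
  rewrite -!big_distrl /= (sum_delta_sub (fun j => g (i : nat, j, (b3 - m3)%N))) h2.
rewrite (sum_delta_sub (fun i => g (i, (b2 - m2)%N, (b3 - m3)%N))).
by case: (leqP m1 b1).
Qed.

End Mono.

Section Hs.
Variable K : fieldType.
Hypothesis char3 : (3%N \in [pchar K]%R).

Lemma WnE (a s n : nat) : Wn K a s n = (count_mem n [seq (s + e)%N | e <- E a])%:R.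
Proof.
have -> : count_mem n [seq (s + e)%N | e <- E a] = if (s <= n)%N then count_mem (n - s)%N (E a) else 0%N.
  by rewrite count_map; exact: cnt_shift.
by rewrite /Wn; case: ifP.
Qed.

Definition cntL (n : nat) (l : seq nat) : nat := count_mem n l.
Arguments cntL : simpl never.

Lemma WnE' (a s n : nat) : Wn K a s n = (cntL n [seq (s + e)%N | e <- E a])%:R.
Proof. exact: WnE. Qed.

Ltac norm_tac n := repeat match goal with |- context [(?x == n)] =>
  let y := eval vm_compute in x in
  tryif constr_eq x y then fail else rewrite (_ : x = y); [|by vm_compute] end.

Lemma comb_a (c1 c2 c3 c4 k : nat) : (c2 + c3 = c1 + c4 + 3 * k)%N ->
  c1%:R + (- c2%:R + (- c3%:R + c4%:R)) = 0 :> K.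
Proof.
move=> /(congr1 (GRing.natmul (1 : K))); have h3k : (3 * k)%:R = 0 :> K by rewrite natrM (pcharf0 char3) mul0r.
rewrite [in RHS]natrD h3k addr0 !natrD => h.
have -> : c1%:R + (- c2%:R + (- c3%:R + c4%:R)) = (c1%:R + c4%:R) - (c2%:R + c3%:R) :> K by ring.
by rewrite h subrr.
Qed.

Lemma comb_b (c1 c2 c3 c4 k : nat) : (c1 + c2 + c3 = c4 + 3 * k)%N ->
  c1%:R + (c2%:R + (c3%:R + - c4%:R)) = 0 :> K.
Proof.
move=> /(congr1 (GRing.natmul (1 : K))); have h3k : (3 * k)%:R = 0 :> K by rewrite natrM (pcharf0 char3) mul0r.
rewrite [in RHS]natrD h3k addr0 !natrD => h.
have -> : c1%:R + (c2%:R + (c3%:R + - c4%:R)) = (c1%:R + c2%:R + c3%:R) - c4%:R :> K by ring.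
by rewrite h subrr.
Qed.


Ltac hP_tac n S kk comb :=
  let hnot := fresh "hnot" in
  rewrite (@rho_loc _ _ _ S) //; [
  rewrite !big_cons !big_nil /e1 /e2 /e3 /= !WnE' /h1 /h2 /h3 /ps_of_terms !big_cons !big_nil /=;
  rewrite ?addr0 ?add0r ?mul1r ?mulN1r; eapply (comb _ _ _ _ kk); rewrite /cntL /=;
  norm_tac n;
  repeat (match goal with |- context [(?x == n)] => case: (x == n) end); done
  | move=> [[p1 p2] p3]; rewrite !inE !xpair_eqE /e1 /e2 /e3 /= => hin hbox;
    rewrite Wn0 ?mulr0 //; lia
  | move=> a b c hnot; rewrite !inE !xpair_eqE in hnot;
    rewrite /h1 /h2 /h3 /ps_of_terms !big_cons !big_nil /= !xpair_eqE;
    do 4 (case: ifP => ?; [exfalso; lia|]);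
    by rewrite !add0r mul0r ].

Lemma h1P : P_ker (h1 K).
Proof. move=> n; hP_tac n [:: (0, 1, 1); (3, 0, 0); (0, 6, 2); (1, 4, 3)]%N ((43 == n) + (68 == n))%N comb_a. Qed.

Lemma h2P : P_ker (h2 K).
Proof. move=> n; hP_tac n [:: (0, 0, 3); (1, 3, 0); (2, 1, 1); (0, 5, 4)]%N ((30 == n) + (55 == n))%N comb_b. Qed.

Lemma h3P : P_ker (h3 K).
Proof. move=> n; hP_tac n [:: (0, 4, 0); (1, 2, 1); (2, 0, 2); (0, 4, 5)]%N ((32 == n) + (57 == n))%N comb_b. Qed.

End Hs.

Section Final.
Variable K : fieldType.

Lemma psmul_comp (p : ps K) (x1 x2 x3 y1 y2 y3 : nat) (b : mon) :
  psmul (psmul p (psmono K (x1, x2, x3))) (psmono K (y1, y2, y3)) b =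
  psmul p (psmono K ((x1 + y1)%N, (x2 + y2)%N, (x3 + y3)%N)) b.
Proof.
case: b => [[b1 b2] b3]; rewrite !psmul_mono.
case: ifP => h1; case: ifP => h2 //; try case: ifP => h3 //; try (exfalso; lia).
congr (p (_, _, _)); lia.
Qed.

Ltac lm_tac :=
  let hb := fresh "hb" in let hne := fresh "hne" in
  split; [ rewrite /h1 /h2 /h3 /ps_of_terms !big_cons !big_nil /=;
           by rewrite ?addr0 ?add0r oner_neq0
         | move=> [[b1 b2] b3] hb hne;
           match type of hne with _ <> (?x, ?y, ?z) => have {}hne : ~ (b1 = x /\ b2 = y /\ b3 = z) by move=> [? [? ?]]; subst; apply: hne end;
           move: hb; rewrite /h1 /h2 /h3 /ps_of_terms !big_cons !big_nil /= !xpair_eqE;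
           rewrite /ds_gt /mdeg /e1 /e2 /e3 /=;
           do 4 (case: ifP => ?; [move=> _; lia|]);
           by rewrite !addr0 eqxx ].

Lemma lm1 : isLM (h1 K) (0, 1, 1)%N.
Proof. lm_tac. Qed.
Lemma lm2 : isLM (h2 K) (0, 0, 3)%N.
Proof. lm_tac. Qed.
Lemma lm3 : isLM (h3 K) (0, 4, 0)%N.
Proof. lm_tac. Qed.
End Final.

Lemma in_ideal_mono (K : fieldType) (S T : ps K -> Prop) (f : ps K) :
  (forall g, S g -> T g) -> in_ideal S f -> in_ideal T f.
Proof. by move=> H [l [hl hf]]; exists l; split => // p /hl /H. Qed.

Lemma in_ideal_repl (K : fieldType) (S T : ps K -> Prop) (f : ps K) :
  (forall g p1, S g -> exists q g', T g' /\ forall b, psmul p1 g b = psmul q g' b) ->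
  in_ideal S f -> in_ideal T f.
Proof.
move=> H [l [hl hf]].
suff [l' [hl' he]] : exists l' : seq (ps K * ps K), (forall p, List.In p l' -> T p.2) /\
    forall b, \sum_(p <- l) psmul p.1 p.2 b = \sum_(p <- l') psmul p.1 p.2 b.
  by exists l'; split => // b; rewrite hf he.
elim: l hl {hf} => [|[p1 g] l IH] hl.
  by exists [::]; split => // b.
have [q [g' [hT he]]] := H g p1 (hl _ (or_introl erefl)).
have [l' [hl' he']] := IH (fun p hp => hl p (or_intror hp)).
exists ((q, g') :: l'); split.
  by move=> p /= [<-|hp] //; exact: hl'.
by move=> b; rewrite !big_cons /= he he'.
Qed.

Theorem mainTheorem12 (K : fieldType) (char3 : 3%N \in [pchar K]%R) :
  standard_basis [:: h1 K; h2 K; h3 K] (@P_ker K).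
Proof.
have hG : forall g, List.In g [:: h1 K; h2 K; h3 K] -> P_ker g.
  move=> g /= [<-|[<-|[<-|[]]]]; [exact: h1P | exact: h2P | exact: h3P].
split => // f; split.
  apply: in_ideal_mono => g [f0 [m [hin [hLM ->]]]]; exists f0, m; split => //; exact: hG.
apply: in_ideal_repl => g p1 [f0 [[[a0 b0] c0] [hP [hLM ->]]]].
have := nonstd char3 hP hLM; case/orP => [/orP [/andP [hb hc] | hc] | hb].
- exists (psmul p1 (psmono K (a0, b0.-1, c0.-1))), (psmono K (0, 1, 1)%N); split.
    by exists (h1 K), (0, 1, 1)%N; split; [left | split; [exact: lm1 | done]].
  move=> b; rewrite psmul_comp; congr (psmul _ (psmono _ (_, _, _)) _); lia.
- exists (psmul p1 (psmono K (a0, b0, c0 - 3)%N)), (psmono K (0, 0, 3)%N); split.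
    by exists (h2 K), (0, 0, 3)%N; split; [right; left | split; [exact: lm2 | done]].
  move=> b; rewrite psmul_comp; congr (psmul _ (psmono _ (_, _, _)) _); lia.
- exists (psmul p1 (psmono K (a0, b0 - 4, c0)%N)), (psmono K (0, 4, 0)%N); split.
    by exists (h3 K), (0, 4, 0)%N; split; [right; right; left | split; [exact: lm3 | done]].
  move=> b; rewrite psmul_comp; congr (psmul _ (psmono _ (_, _, _)) _); lia.
Qed.
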